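(* Let $N,R,k\in\mathbb{N}$. For every choice of bijections $g_1,\dots,g_R:[N]\to[N]$ there exists a $1$-layer transformer (with learned embeddings) with embedding dimension $d=\tilde O(R+k)$ and MLP width $\tilde O(R)$ that solves the $k$-hop factual recall problem with Chain-of-Thought: on every input $(s_0,r_1,\dots,r_k)\in[N]\times[R]^k$, generating autoregressively it produces tokens $s_1,\dots,s_k$ with $s_i=g_{r_i}(s_{i-1})$, so that its final output is $(g_{r_k}\circ\cdots\circ g_{r_1})(s_0)$.
   Context: Write $[N]=\{1,\dots,N\}$. Subjects are $[N]$, relations are $[R]$, each relation $r$ has a bijection $g_r:[N]\to[N]$. The transformer is over vocabulary $[N]\cup[R]$ with embeddings in $\mathbb{R}^d$; a layer applies (causal, softmax) self-attention $Z=\sum_h W_V^{(h)}X(A^{(h)})^\top$ with $A^{(h)}=\mathrm{softmax}((W_K^{(h)}X)^\top(W_Q^{(h)}X))$, a residual $\tilde X=Z+X$, and a column-wise ReLU MLP with residual $X'=\tilde X+\mathrm{MLP}(\tilde X)$. Chain-of-Thought means the model generates tokens autoregressively, each generated token (chosen by decoding the last position's output into the vocabulary) being appended to the sequence before the next forward pass. $\tilde O(\cdot)$ suppresses logarithmic factors. *)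

(* Defs.v *)
From HB Require Import structures.
From Stdlib Require Import Reals.
From mathcomp Require Import all_boot all_order all_algebra.
From mathcomp Require Import Rstruct.
Set Implicit Arguments. Unset Strict Implicit. Unset Printing Implicit Defensive.
Import Order.TTheory GRing.Theory Num.Theory.
Local Open Scope ring_scope.

Definition vocab (N Rn : nat) : finType := ('I_N + 'I_Rn)%type.

Record transformer (N Rn d m : nat) := Transformer {
  emb : vocab N Rn -> 'cV[R]_d;
  pos : nat -> 'cV[R]_d;
  nheads : nat;
  WQ : 'I_nheads -> 'M[R]_d;
  WK : 'I_nheads -> 'M[R]_d;
  WV : 'I_nheads -> 'M[R]_d;
  W1 : 'M[R]_(m, d);
  b1 : 'cV[R]_m;
  W2 : 'M[R]_(d, m);
  b2 : 'cV[R]_d;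
  unemb : vocab N Rn -> 'rV[R]_d
}.

Arguments WQ {N Rn d m} t _.
Arguments WK {N Rn d m} t _.
Arguments WV {N Rn d m} t _.

Section Forward.
Variables (N Rn d m : nat) (M : transformer N Rn d m).

Definition xcol (s : seq (vocab N Rn)) (i : nat) : 'cV[R]_d :=
  nth 0 (map (emb M) s) i + pos M i.

Definition score (s : seq (vocab N Rn)) (h : 'I_(nheads M)) (i j : nat) : R :=
  (((WK M h *m xcol s i)^T) *m (WQ M h *m xcol s j)) 0 0.

Definition attn_last (s : seq (vocab N Rn)) : 'cV[R]_d :=
  let j := (size s).-1 in
  \sum_(h < nheads M) \sum_(i < size s)
     (exp (score s h i j) / \sum_(i' < size s) exp (score s h i' j))
       *: (WV M h *m xcol s i).

Definition relu_col (n : nat) (v : 'cV[R]_n) : 'cV[R]_n :=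
  map_mx (fun t : R => Num.max t 0) v.

Definition out_last (s : seq (vocab N Rn)) : 'cV[R]_d :=
  let z := attn_last s + xcol s (size s).-1 in
  z + (W2 M *m relu_col (W1 M *m z + b1 M) + b2 M).

Definition logit (s : seq (vocab N Rn)) (v : vocab N Rn) : R :=
  (unemb M v *m out_last s) 0 0.

Definition decode (s : seq (vocab N Rn)) : option (vocab N Rn) :=
  [pick v | [forall w, (w != v) ==> (logit s w < logit s v)]].

Fixpoint generate (s : seq (vocab N Rn)) (n : nat) : option (seq (vocab N Rn)) :=
  match n with
  | 0 => Some [::]
  | n'.+1 =>
      match decode s with
      | Some v => omap (cons v) (generate (rcons s v) n')
      | None => None
      end
  end.

End Forward.

Definition hops (N Rn : nat) (g : 'I_Rn -> 'I_N -> 'I_N)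
  (s0 : 'I_N) (rs : seq 'I_Rn) : seq 'I_N :=
  scanl (fun s r => g r s) s0 rs.

Definition prompt (N Rn : nat) (s0 : 'I_N) (rs : seq 'I_Rn) : seq (vocab N Rn) :=
  (inl s0 : vocab N Rn) :: map (fun r => (inr r : vocab N Rn)) rs.

(* logarithmic factor used in the O~ bounds *)
Definition logfac (N Rn k : nat) : nat := trunc_log 2 (N + Rn + k + 2).

(* Main.v *)
Require Import Defs.
From HB Require Import structures.
From Stdlib Require Import Reals.
From mathcomp Require Import all_boot all_order all_algebra.
From mathcomp Require Import Rstruct.
From mathcomp Require Import ring lra zify.
Set Implicit Arguments. Unset Strict Implicit. Unset Printing Implicit Defensive.
Import Order.TTheory GRing.Theory Num.Theory.
Local Open Scope ring_scope.

Lemma exp_gt (L : R) : 0 < L -> L < exp L.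
Proof.
move=> L0.
have H1 := exp_ineq1 L.
have H2 : 1 + L < exp L.
  apply/RltP; apply: H1 => E; rewrite E in L0; by rewrite ltxx in L0.
lra.
Qed.

Lemma exp0 : exp 0 = 1 :> R.
Proof. exact: exp_0. Qed.

Lemma attn_approx n (sc v : 'I_n -> R) (t : 'I_n) (L V : R) :
  0 < L -> (forall i, sc i = if i == t then L else 0) -> (forall i, 0 <= v i <= V) ->
  `|\sum_i (exp (sc i) / \sum_i' exp (sc i')) * v i - v t| * L <= V * n%:R.
Proof.
move=> L0 Hsc Hv.
set D := \sum_i' exp (sc i').
set c := \sum_(i | i != t) (1 : R).
set Sv := \sum_(i | i != t) v i.
have HD : D = exp L + c.
  rewrite /D (bigD1 t) //= Hsc eqxx; congr (_ + _).
  apply: eq_bigr => i /negbTE it; by rewrite Hsc it exp0.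
have c0 : 0 <= c by apply: sumr_ge0.
have cn : c <= n%:R.
  have : \sum_(i < n) (1:R) = 1 + c by rewrite (bigD1 t).
  rewrite sumr_const card_ord => E. have : (n%:R : R) = 1 + c by rewrite -E.
  move=> ->; lra.
have EL := exp_gt L0.
have D0 : 0 < D by rewrite HD; lra.
have Hsum : \sum_i (exp (sc i) / D) * v i = (exp L * v t + Sv) / D.
  rewrite (bigD1 t) //= Hsc eqxx mulrDl /Sv mulr_suml; congr (_ + _).
    by rewrite mulrAC.
  apply: eq_bigr => i /negbTE it; by rewrite Hsc it exp0 mul1r mulrC.
rewrite Hsum.
have -> : (exp L * v t + Sv) / D - v t = (Sv - c * v t) / D.
  apply: (@mulIf _ D); first by rewrite gt_eqF.
  rewrite mulrBl !mulfVK ?gt_eqF // HD; ring.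
have Sv0 : 0 <= Sv by apply: sumr_ge0 => i _; case/andP: (Hv i).
have SvV : Sv <= c * V.
  rewrite /Sv /c mulr_suml; apply: ler_sum => i _; rewrite mul1r; by case/andP: (Hv i).
have [vt0 vtV] := andP (Hv t).
have cvt0 : 0 <= c * v t by apply: mulr_ge0.
have cvtV : c * v t <= c * V by apply: ler_wpM2l.
have Habs : `|Sv - c * v t| <= c * V.
  rewrite ler_norml; apply/andP; split; lra.
have LD : L / D <= 1.
  rewrite ler_pdivrMr // mul1r; lra.
have V0 : 0 <= V by lra.
have Di0 : 0 <= D^-1 by rewrite invr_ge0 ltW.
rewrite normrM (ger0_norm Di0) mulrAC -mulrA.
apply: (@le_trans _ _ (`|Sv - c * v t| * 1)).
  apply: ler_wpM2l => //; exact: normr_ge0.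
rewrite mulr1; apply: (le_trans Habs).
rewrite mulrC; apply: ler_wpM2l => //.
Qed.

Lemma sb (e a K S c : R) : 0 < K -> 0 <= c -> S <= 2*K -> e * (16*K*a) <= c*S -> e*a*8 <= c.
Proof. move=> *; nra. Qed.

Lemma max0_le (x v : R) : 0 <= v -> `|Num.max x 0 - v| <= `|x - v|.
Proof.
move=> v0; rewrite /Order.max; case: (ltrP x 0) => hx //.
rewrite sub0r normrN ger0_norm // ler_normr; apply/orP; right; lra.
Qed.

Lemma arith_target (a rho sig v : R) : 1 <= a -> `|rho - 1| * a * 8 <= 1 ->
  `|sig - v| * a * 8 <= a - 1 -> 0 <= v ->
  `|Num.max (2 * a * rho + sig - 2 * a) 0 - v| < 1/2.
Proof.
move=> a1 h1 h2 v0; apply: (le_lt_trans (max0_le _ v0)).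
have p1 : `|(rho - 1) * a| * 8 <= 1 by rewrite normrM (ger0_norm (x:=a)); lra.
have p2 : `|sig - v| * 8 <= 1.
  have n0 := normr_ge0 (sig - v). nra.
have -> : 2 * a * rho + sig - 2 * a - v = 2 * ((rho - 1) * a) + (sig - v) by ring.
move: p1 p2; set p := (rho - 1) * a; set q := sig - v => p1 p2.
have := ler_normD (2 * p) q; rewrite normrM ger0_norm; last lra.
lra.
Qed.

Lemma arith_other (a rho sig v : R) : 1 <= a -> `|rho| * a * 8 <= 1 ->
  `|sig - v| * a * 8 <= a - 1 -> v <= a - 1 ->
  Num.max (2 * a * rho + sig - 2 * a) 0 = 0.
Proof.
move=> a1 h1 h2 v1; rewrite /Order.max; case: ltrP => // hx.
have p1 : `|rho * a| * 8 <= 1 by rewrite normrM (ger0_norm (x:=a)); lra.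
have p2 : `|sig - v| * 8 <= 1.
  have n0 := normr_ge0 (sig - v). nra.
have r1 := ler_norm (rho * a). have r2 := ler_norm (sig - v).
lra.
Qed.

Lemma cmp_inl (u v : nat) (y : R) : u != v -> `|y - v%:R| < 1/2 ->
  2 * u%:R * y - u%:R ^+ 2 < 2 * v%:R * y - v%:R ^+ 2.
Proof.
move=> uv hy.
have [hy1 hy2] : v%:R - 1/2 < y /\ y < v%:R + 1/2.
  move: hy; rewrite ltr_norml => /andP[? ?]; split; lra.
case: (ltngtP u v) => [h|h|h]; last by rewrite h eqxx in uv.
  have : (u.+1)%:R <= v%:R :> R by rewrite ler_nat.
  rewrite -addn1 natrD => h'. nra.
have : (v.+1)%:R <= u%:R :> R by rewrite ler_nat.
rewrite -addn1 natrD => h'. nra.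
Qed.

Lemma cmp_inr (v : nat) (y : R) : `|y - v%:R| < 1/2 -> -1 < 2 * v%:R * y - v%:R ^+ 2.
Proof.
move=> hy.
have [hy1 hy2] : v%:R - 1/2 < y /\ y < v%:R + 1/2.
  move: hy; rewrite ltr_norml => /andP[? ?]; split; lra.
clear hy; case: v hy1 hy2 => [|v] hy1 hy2; first by rewrite mulr0 mul0r expr0n /=; lra.
have : 1 <= (v.+1)%:R :> R by rewrite ler1n.
move=> h. nra.
Qed.

Section Construction.
Variables (N Rn k : nat) (g : 'I_Rn -> 'I_N -> 'I_N).

Definition T : finType :=
  ('I_(k+k) + ('I_Rn + ('I_Rn + ('I_Rn + ('I_Rn + bool)))))%type.

Definition vec (f : T -> R) : 'cV[R]_#|T| := \col_a f (enum_val a).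
Definition mat (F : T -> T -> R) : 'M[R]_#|T| :=
  \matrix_(a, b) F (enum_val a) (enum_val b).

Lemma vecE f t : vec f (enum_rank t) 0 = f t.
Proof. by rewrite mxE enum_rankK. Qed.

Lemma sumT (h : 'I_#|T| -> R) : \sum_a h a = \sum_t h (enum_rank t).
Proof.
rewrite (reindex (@enum_rank T)) //.
exists (fun a : 'I_#|T| => enum_val a) => x _; [exact: enum_rankK | exact: enum_valK].
Qed.

Lemma mat_vec F f : mat F *m vec f = vec (fun t => \sum_u F t u * f u).
Proof.
apply/matrixP => a j; rewrite !mxE (ord1 j) sumT.
by apply: eq_bigr => u _; rewrite !mxE enum_rankK.
Qed.

Lemma dotE f h : ((vec f)^T *m vec h) 0 0 = \sum_t f t * h t.
Proof.
rewrite !mxE sumT; by apply: eq_bigr => u _; rewrite !mxE enum_rankK.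
Qed.

Lemma vecZ c f : c *: vec f = vec (fun t => c * f t).
Proof. by apply/matrixP => a j; rewrite !mxE. Qed.

Lemma vecD f h : vec f + vec h = vec (fun t => f t + h t).
Proof. by apply/matrixP => a j; rewrite !mxE. Qed.

Definition selm (sel : T -> option T) (t u : T) : R :=
  if sel t is Some x then (if u == x then 1 else 0) else 0.

Lemma sum_sel sel f t :
  \sum_u selm sel t u * f u = if sel t is Some x then f x else 0.
Proof.
rewrite /selm; case: (sel t) => [x|].
  rewrite (bigD1 x) //= eqxx mul1r big1 ?addr0 // => u /negbTE ->; by rewrite mul0r.
by rewrite big1 // => u _; rewrite mul0r.
Qed.

Definition FY (b : bool) : T := inr (inr (inr (inr (inr b)))).
Definition Frho r : T := inr (inr (inr (inl r))).
Definition Fsig r : T := inr (inr (inr (inr (inl r)))).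
Definition Frel r : T := inr (inl r).
Definition FG r : T := inr (inr (inl r)).

Definition ftok (v : vocab N Rn) (t : T) : R :=
  match v, t with
  | inr r, inr (inl r') => (r == r')%:R
  | inl u, inr (inr (inl r)) => (g r u : nat)%:R
  | _, _ => 0
  end.
Definition fpos (i : nat) (t : T) : R :=
  match t with inl q => (i == q)%:R | _ => 0 end.

Definition kappa (h j : nat) : nat :=
  if h == 0%N then (j - k + 1)%N else if j == k then 0%N else j.

Definition selK (h : nat) (t : T) : option T :=
  match t with
  | inl q => omap (fun o : 'I_(k+k) => (inl o : T)) (insub (kappa h q))
  | _ => None end.
Definition selV (h : nat) (t : T) : option T :=
  match t with
  | inr (inr (inr (inl r))) => if h == 0%N then Some (Frel r) else None
  | inr (inr (inr (inr (inl r)))) => if h == 0%N then None else Some (FG r)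
  | _ => None end.

Definition Lv : R := (16 * k * N.+1)%:R.
Definition Bv : R := (2 * N.+1)%:R.

Definition W1m : 'M[R]_(Rn, #|T|) := \matrix_(r, a)
  (match enum_val a with
   | inr (inr (inr (inl r'))) => Bv * (r == r')%:R
   | inr (inr (inr (inr (inl r')))) => (r == r')%:R
   | _ => 0 end).
Definition b1v : 'cV[R]_Rn := const_mx (- Bv).
Definition W2m : 'M[R]_(#|T|, Rn) := \matrix_(a, r) (if enum_val a == FY true then 1 else 0).
Definition b2v := vec (fun t => if t == FY false then 1 else 0).
Definition fU (v : vocab N Rn) (t : T) : R :=
  match v with
  | inl u => if t == FY true then 2 * (u : nat)%:R
             else if t == FY false then - ((u : nat)%:R ^+ 2) else 0
  | inr _ => if t == FY false then -1 else 0 end.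
Definition unembm (v : vocab N Rn) : 'rV[R]_#|T| := \row_a fU v (enum_val a).

Definition Model : transformer N Rn #|T| Rn :=
  @Transformer N Rn #|T| Rn (fun v => vec (ftok v)) (fun i => vec (fpos i)) 2
    (fun _ => Lv%:M) (fun h => mat (selm (selK h))) (fun h => mat (selm (selV h)))
    W1m b1v W2m b2v unembm.

Lemma xcolE s x0 i : (i < size s)%N ->
  Defs.xcol Model s i = vec (fun t => ftok (nth x0 s i) t + fpos i t).
Proof.
move=> Hi; rewrite /Defs.xcol (nth_map x0) //= vecD //.
Qed.


Lemma ftok_pos v q : ftok v (inl q) = 0.
Proof. by case: v. Qed.

Lemma scoreE s (x0 : vocab N Rn) (h : 'I_2) i j : (i < size s)%N -> (j < size s)%N ->
  (k <= j < k + k)%N ->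
  score (M:=Model) s h i j = if i == kappa h j then Lv else 0.
Proof.
move=> Hi Hj /andP[kj jk].
rewrite /score /= (xcolE x0 Hi) (xcolE x0 Hj) !mat_vec mul_scalar_mx vecZ dotE.
have Hk : (kappa h j < k + k)%N.
  rewrite /kappa; case: (nat_of_ord h == 0%N); [|case: (j == k)]; lia.
rewrite (bigD1 (inl (Ordinal jk) : T)) //= [X in _ + X]big1 ?addr0.
  rewrite sum_sel /= insubT /= ftok_pos add0r /fpos /= ftok_pos add0r eqxx mulr1.
  by case: (i == kappa h j); rewrite ?mul1r ?mul0r.
move=> [q|t] Ht.
  have : j != q by apply: contra Ht => /eqP E; apply/eqP; congr inl; apply: val_inj.
  rewrite /fpos ftok_pos add0r => /negbTE ->; by rewrite mulr0 mulr0.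
by rewrite sum_sel /= mul0r.
Qed.


Definition wt (s : seq (vocab N Rn)) (h : 'I_2) (i : nat) : R :=
  exp (score (M:=Model) s h i (size s).-1) /
    \sum_(i' < size s) exp (score (M:=Model) s h i' (size s).-1).

Lemma attnE s (x0 : vocab N Rn) t :
  attn_last Model s (enum_rank t) 0 =
  \sum_(h < 2) \sum_(i < size s) wt s h i *
     (if selV h t is Some x then ftok (nth x0 s i) x + fpos i x else 0).
Proof.
rewrite /attn_last /= summxE; apply: eq_bigr => h _; rewrite summxE.
apply: eq_bigr => i _.
by rewrite mxE (xcolE x0 (ltn_ord i)) mat_vec vecE sum_sel.
Qed.

Lemma attn_rho s (x0 : vocab N Rn) r :
  attn_last Model s (enum_rank (Frho r)) 0 =
  \sum_(i < size s) wt s 0 i * ftok (nth x0 s i) (Frel r).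
Proof.
rewrite (attnE _ x0) big_ord_recl big_ord1 /=.
rewrite [X in _ + X]big1 ?addr0 => [|i _]; last by rewrite mulr0.
by apply: eq_bigr => i _; rewrite /fpos addr0.
Qed.

Lemma attn_sig s (x0 : vocab N Rn) r :
  attn_last Model s (enum_rank (Fsig r)) 0 =
  \sum_(i < size s) wt s 1 i * ftok (nth x0 s i) (FG r).
Proof.
rewrite (attnE _ x0) big_ord_recl big_ord1 /=.
rewrite [X in X + _]big1 ?add0r => [|i _]; last by rewrite mulr0.
by apply: eq_bigr => i _; rewrite /fpos addr0.
Qed.

Lemma attn_Y s (x0 : vocab N Rn) b :
  attn_last Model s (enum_rank (FY b)) 0 = 0.
Proof.
rewrite (attnE _ x0) big1 // => h _; rewrite big1 // => i _; by rewrite mulr0.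
Qed.


Lemma W1zE (z : 'cV[R]_#|T|) r :
  (W1m *m z) r 0 = Bv * z (enum_rank (Frho r)) 0 + z (enum_rank (Fsig r)) 0.
Proof.
rewrite mxE sumT (bigD1 (Frho r)) //= (bigD1 (Fsig r)) //= big1.
  by rewrite !mxE !enum_rankK /= eqxx mulr1 mul1r addr0.
move=> [q|[a|[a|[a|[a|b]]]]] /andP[H1 H2]; rewrite mxE enum_rankK ?mul0r //.
  have /negbTE -> : r != a by apply: contra H1 => /eqP ->.
  by rewrite mulr0 mul0r.
have /negbTE -> : r != a by apply: contra H2 => /eqP ->.
by rewrite mul0r.
Qed.

Lemma outE s (x0 : vocab N Rn) t : (0 < size s)%N ->
  out_last Model s (enum_rank t) 0 =
  attn_last Model s (enum_rank t) 0 + (ftok (nth x0 s (size s).-1) t + fpos (size s).-1 t)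
  + ((\sum_(r < Rn) (if t == FY true then 1 else 0) *
        Num.max (Bv * (attn_last Model s (enum_rank (Frho r)) 0)
                + attn_last Model s (enum_rank (Fsig r)) 0 - Bv) 0)
     + (if t == FY false then 1 else 0)).
Proof.
move=> s0.
have Hl : ((size s).-1 < size s)%N by rewrite prednK.
rewrite /out_last /= mxE.
set z := attn_last Model s + _.
have zE : forall t, z (enum_rank t) 0 = attn_last Model s (enum_rank t) 0 +
   (ftok (nth x0 s (size s).-1) t + fpos (size s).-1 t).
  by move=> t'; rewrite /z mxE (xcolE x0 Hl) vecE.
rewrite zE; congr (_ + _).
rewrite mxE /b2v vecE; congr (_ + _).
rewrite mxE; apply: eq_bigr => r _.
rewrite mxE enum_rankK /relu_col mxE [(W1m *m z + b1v) r 0]mxE /b1v [const_mx _ r 0]mxE W1zE !zE; congr (_ * Num.max _ 0).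
rewrite /Frho /Fsig /ftok /fpos /=; case: (nth x0 s (size s).-1) => ? ; by rewrite !addr0.
Qed.


Lemma ftok_Y v b : ftok v (FY b) = 0.
Proof. by case: v. Qed.

Lemma outY1 s (x0 : vocab N Rn) : (0 < size s)%N ->
  out_last Model s (enum_rank (FY true)) 0 =
  \sum_(r < Rn) Num.max (Bv * (attn_last Model s (enum_rank (Frho r)) 0)
                + attn_last Model s (enum_rank (Fsig r)) 0 - Bv) 0.
Proof.
move=> s0; rewrite (outE x0) // (attn_Y _ x0) ftok_Y /fpos /= ?add0r ?addr0.
by apply: eq_bigr => r _; rewrite mul1r.
Qed.

Lemma outY2 s (x0 : vocab N Rn) : (0 < size s)%N ->
  out_last Model s (enum_rank (FY false)) 0 = 1.
Proof.
move=> s0; rewrite (outE x0) // (attn_Y _ x0) ftok_Y /fpos /= ?add0r ?addr0.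
rewrite big1 ?add0r //= => r _; by rewrite mul0r.
Qed.

Lemma logitE s (x0 : vocab N Rn) v : (0 < size s)%N ->
  logit Model s v = fU v (FY true) * out_last Model s (enum_rank (FY true)) 0
                  + fU v (FY false) * out_last Model s (enum_rank (FY false)) 0.
Proof.
move=> s0; rewrite /logit mxE sumT (bigD1 (FY true)) //= (bigD1 (FY false)) //=.
rewrite [X in _ + (_ + X)]big1 ?addr0 ?mxE ?enum_rankK //.
move=> t /andP[H1 H2]; rewrite mxE enum_rankK /fU.
by case: v => [u|u]; rewrite ?(negbTE H1) ?(negbTE H2) mul0r.
Qed.


Lemma decode_some s v :
  (forall w, w != v -> logit Model s w < logit Model s v) -> decode Model s = Some v.
Proof.
move=> H; rewrite /decode; case: pickP => [x Hx | Hn].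
  case: (eqVneq x v) => [-> // | xv].
  have := H _ xv; move/forallP: Hx => /(_ v) /implyP.
  rewrite eq_sym xv => /(_ isT) h1 h2.
  by have := lt_trans h1 h2; rewrite ltxx.
have := Hn v; have -> // : [forall w, (w != v) ==> (logit Model s w < logit Model s v)].
apply/forallP => w; apply/implyP; exact: H.
Qed.

Lemma decode_step s (x0 : vocab N Rn) i rr cu : (0 < k)%N -> (i < k)%N ->
  size s = (k + i).+1 ->
  nth x0 s i.+1 = inr rr -> nth x0 s (kappa 1 (k + i)) = inl cu ->
  decode Model s = Some (inl (g rr cu)).
Proof.
move=> k0 ik Hs Hr Hc.
have s0 : (0 < size s)%N by rewrite Hs.
have Hj : (size s).-1 = (k + i)%N by rewrite Hs.
have kj : (k <= k + i < k + k)%N by lia.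
have Lpos : 0 < Lv by rewrite /Lv ltr0n !muln_gt0 k0.
set a : R := (N.+1)%:R.
have a1 : 1 <= a by rewrite /a ler1n.
have LvE : Lv = 16 * k%:R * a by rewrite /Lv !natrM.
have BvE : Bv = 2 * a by rewrite /Bv natrM.
have Na : (N%:R : R) = a - 1 by rewrite /a -addn1 natrD; ring.
have S2 : (size s)%:R <= 2 * (k%:R : R).
  have : (size s <= 2 * k)%N by rewrite Hs; lia.
  by rewrite -(ler_nat R) natrM.
have kpos : 0 < (k%:R : R) by rewrite ltr0n.
have Hrho : forall r, `|attn_last Model s (enum_rank (Frho r)) 0 - (rr == r)%:R| * a * 8 <= 1.
  move=> r; rewrite (attn_rho _ x0).
  have t_lt : (kappa 0 (size s).-1 < size s)%N.
    rewrite Hj /kappa /= Hs; lia.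
  have := @attn_approx (size s) (fun i' => score (M:=Model) s 0 i' (size s).-1)
     (fun i' => ftok (nth x0 s i') (Frel r)) (Ordinal t_lt) Lv 1 Lpos.
  have Ht : ftok (nth x0 s (Ordinal t_lt)) (Frel r) = (rr == r)%:R.
    by rewrite /= Hj /kappa /= (_ : (k + i - k + 1 = i.+1)%N) ?Hr //; lia.
  rewrite Ht /wt => H; apply: (sb kpos ler01 S2); rewrite -LvE.
  apply: H.
    move=> i'; rewrite (scoreE x0) //; rewrite ?Hj ?Hs; lia.
  move=> i'; case: (nth x0 s i') => ? /=; rewrite ?ler01 ?lexx //.
  by case: eqP; rewrite ?ler01 ?lexx.
have Hsig : forall r, `|attn_last Model s (enum_rank (Fsig r)) 0 - (g r cu : nat)%:R| * a * 8 <= N%:R.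
  move=> r; rewrite (attn_sig _ x0).
  have t_lt : (kappa 1 (size s).-1 < size s)%N by rewrite Hj /kappa /= Hs; case: (_ == _); lia.
  have := @attn_approx (size s) (fun i' => score (M:=Model) s 1 i' (size s).-1)
     (fun i' => ftok (nth x0 s i') (FG r)) (Ordinal t_lt) Lv N%:R Lpos.
  have Ht : ftok (nth x0 s (Ordinal t_lt)) (FG r) = (g r cu : nat)%:R.
    by rewrite /= Hj Hc.
  rewrite Ht /wt => H; apply: (sb kpos (ler0n _ _) S2); rewrite -LvE.
  apply: H.
    move=> i'; rewrite (scoreE x0) //; rewrite ?Hj ?Hs; lia.
  move=> i'; case: (nth x0 s i') => u /=; first by rewrite ler0n ler_nat ltnW.
  by rewrite lexx ler0n.
set y := out_last Model s (enum_rank (FY true)) 0.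
have Hy2 := outY2 x0 s0.
have Hy : `|y - (g rr cu : nat)%:R| < 1/2.
  rewrite /y (outY1 x0 s0) (bigD1 rr) //= big1 ?addr0.
    rewrite BvE; apply: arith_target => //.
    - by have := Hrho rr; rewrite eqxx.
    - by rewrite -Na; exact: Hsig rr.
  move=> r /negbTE rn; rewrite BvE; apply: (@arith_other a _ _ (g r cu : nat)%:R) => //.
  - by have := Hrho r; rewrite eq_sym rn subr0.
  - by rewrite -Na; exact: Hsig r.
  - by rewrite -Na ler_nat ltnW.
apply: decode_some => w hw; rewrite !(logitE x0) // Hy2 -/y.
case: w hw => [u | r'] hw /=.
  rewrite !mulr1; apply: cmp_inl => //.
rewrite mul0r add0r !mulr1; exact: cmp_inr.
Qed.


Lemma gen_ind (k0 : (0 < k)%N) (s0 : 'I_N) (r0 : 'I_Rn) (rs : seq 'I_Rn) :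
  size rs = k ->
  forall n p, (p + n = k)%N ->
  generate Model (prompt s0 rs ++ map (fun s => (inl s : vocab N Rn)) (take p (hops g s0 rs))) n
  = Some (map (fun s => (inl s : vocab N Rn)) (drop p (hops g s0 rs))).
Proof.
move=> Hrs; set H := hops g s0 rs.
have HH : size H = k by rewrite /H /hops size_scanl.
set cur := fun p => foldl (fun s r => g r s) s0 (take p rs).
have Hnth : forall p, (p < k)%N -> nth s0 H p = g (nth r0 rs p) (cur p).
  move=> p pk; rewrite /H /hops nth_scanl ?Hrs // (take_nth r0) ?Hrs //.
  by rewrite foldl_rcons.
elim=> [|n IH] p Hp.
  rewrite addn0 in Hp; rewrite Hp drop_oversize ?HH //.
have pk : (p < k)%N by lia.
set S := prompt s0 rs ++ _.
have HS : size S = (k + p).+1.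
  rewrite /S /prompt /= size_cat !size_map size_take HH pk Hrs; lia.
have Hr : nth (inl s0) S p.+1 = inr (nth r0 rs p).
  rewrite /S /prompt /= nth_cat size_map Hrs pk (nth_map r0) ?Hrs //.
have Hc : nth (inl s0) S (kappa 1 (k + p)) = inl (cur p).
  rewrite /kappa /=; case: eqP => [Ek|Nk].
    have -> : p = 0%N by lia.
    by rewrite /S /prompt /= /cur take0.
  have -> : (k + p = (k + (p.-1)).+1)%N by lia.
  rewrite /S /prompt /= nth_cat size_map Hrs.
  have -> : (k + p.-1 < k)%N = false by lia.
  rewrite (_ : (k + p.-1 - k = p.-1)%N); last by lia.
  rewrite (nth_map s0) ?size_take ?HH ?pk; last by lia.
  rewrite nth_take; last by lia.
  rewrite /H /hops nth_scanl ?Hrs; last by lia.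
  by rewrite prednK //; lia.
change (match decode Model S with Some v => omap (cons v) (generate Model (rcons S v) n)
   | None => None end = Some (map (fun s => (inl s : vocab N Rn)) (drop p H))).
rewrite (decode_step k0 pk HS Hr Hc) -Hnth //.
have -> : rcons S (inl (nth s0 H p)) =
    prompt s0 rs ++ map (fun s => (inl s : vocab N Rn)) (take p.+1 H).
  by rewrite /S (take_nth s0) ?HH // map_rcons rcons_cat.
rewrite IH; last by lia.
by rewrite [drop p H](drop_nth s0) ?HH.
Qed.

End Construction.

Close Scope ring_scope.

Lemma case0 N Rn (g : 'I_Rn -> 'I_N -> 'I_N) :
    exists (d m : nat) (M : transformer N Rn d m),
      [/\ (d <= 4 * (Rn + 0) * logfac N Rn 0 ^ 0)%N,
          (m <= 4 * Rn * logfac N Rn 0 ^ 0)%N &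
          forall (s0 : 'I_N) (rs : 0.-tuple 'I_Rn),
            generate M (prompt s0 rs) 0 =
            Some (map (fun s => (inl s : vocab N Rn)) (hops g s0 rs))].
Proof.
  exists 0%N, 0%N, (@Transformer N Rn 0 0 (fun _ => 0%R) (fun _ => 0%R) 0
     (fun _ => 0%R) (fun _ => 0%R) (fun _ => 0%R) 0%R 0%R 0%R 0%R (fun _ => 0%R)).
  split => // s0 rs.
  have -> : (rs : seq _) = [::] by apply/nilP; rewrite /nilp size_tuple.
  by [].
Qed.

Lemma casek N Rn k (g : 'I_Rn -> 'I_N -> 'I_N) : (0 < k)%N ->
    exists (d m : nat) (M : transformer N Rn d m),
      [/\ (d <= 4 * (Rn + k) * logfac N Rn k ^ 0)%N,
          (m <= 4 * Rn * logfac N Rn k ^ 0)%N &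
          forall (s0 : 'I_N) (rs : k.-tuple 'I_Rn),
            generate M (prompt s0 rs) k =
            Some (map (fun s => (inl s : vocab N Rn)) (hops g s0 rs))].
Proof.
move=> kpos.
exists #|T Rn k|, Rn, (@Model N Rn k g); split.
- rewrite expn0 muln1 !card_sum !card_ord card_bool; lia.
- rewrite expn0 muln1; lia.
move=> s0 rs.
have r0 := tnth rs (Ordinal kpos).
have := @gen_ind N Rn k g kpos s0 r0 rs (size_tuple rs) k 0%N (add0n k).
by rewrite take0 cats0 drop0.
Qed.

Theorem theorem4 :
  exists (C c : nat), forall (N Rn k : nat) (g : 'I_Rn -> 'I_N -> 'I_N),
    (forall r, bijective (g r)) ->
    exists (d m : nat) (M : transformer N Rn d m),
      [/\ (d <= C * (Rn + k) * logfac N Rn k ^ c)%N,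
          (m <= C * Rn * logfac N Rn k ^ c)%N &
          forall (s0 : 'I_N) (rs : k.-tuple 'I_Rn),
            generate M (prompt s0 rs) k =
            Some (map (fun s => (inl s : vocab N Rn)) (hops g s0 rs))].
Proof.
exists 4%N, 0%N => N Rn k g _.
case: (posnP k) => [->|kpos]; [exact: case0 | exact: casek].
Qed.
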